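(* Let $A$ be a finite abelian group of even order, let $T$ be a square-free subset of $A$, and let $X\subseteq A$ be inverse-closed (i.e. $-X=X$). Then $X$ is a perfect code of $\mathrm{CayS}(A,T)$ if and only if $A=X\oplus T^0$, where $T^0=T\cup\{0\}$.
   Context: $A$ is written additively with identity $0$. An element $x$ of $A$ is a square if $x=2y$ for some $y\in A$; a subset is square-free if it contains no squares. For a square-free $T\subseteq A$, the Cayley sum graph $\mathrm{CayS}(A,T)$ is the simple graph with vertex set $A$ in which distinct $x,y$ are adjacent iff $x+y\in T$. A subset $C$ of the vertex set of a graph is a perfect code if every vertex is at distance at most one from exactly one vertex of $C$. For subsets $M,N\subseteq A$, we write $A=M\oplus N$ if every element $a\in A$ can be written in a unique way as $a=m+n$ with $m\in M$, $n\in N$. *)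

(* Defs.v *)
From mathcomp Require Import all_boot all_order all_algebra.
Set Implicit Arguments. Unset Strict Implicit. Unset Printing Implicit Defensive.
Import GRing.Theory.
Local Open Scope ring_scope.

Section CaySum.
Variable A : finZmodType.

Definition is_square (x : A) : Prop := exists y : A, x = y *+ 2.

Definition square_free (T : {set A}) : Prop :=
  forall x, x \in T -> ~ is_square x.

Definition cays_adj (T : {set A}) (x y : A) : bool := (x != y) && (x + y \in T).

Definition cays_ball (T : {set A}) (v : A) : {set A} :=
  [set c | (c == v) || cays_adj T v c].

Definition perfect_code (T : {set A}) (C : {set A}) : Prop :=
  forall v : A, #|C :&: cays_ball T v| = 1%N.

Definition direct_sum_decomp (M N : {set A}) : Prop :=
  forall a : A, exists! p : A * A, [/\ p.1 \in M, p.2 \in N & a = p.1 + p.2].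

Definition inverse_closed (X : {set A}) : Prop :=
  [set - x | x in X] = X.

End CaySum.

(* Main.v *)
Require Import Defs.
From mathcomp Require Import all_boot all_order all_algebra.
Local Open Scope ring_scope.
Import GRing.Theory.

Section Aux.
Variable A : finZmodType.
Implicit Types T X : {set A}.

Lemma negX X : inverse_closed X -> forall x : A, (- x \in X) = (x \in X).
Proof.
move=> HX.
have H1 : forall y : A, y \in X -> - y \in X.
  by move=> y Hy; rewrite -HX; apply: imset_f.
move=> x; apply/idP/idP; last exact: H1.
by move=> /H1; rewrite opprK.
Qed.

Lemma ds_iff T X : direct_sum_decomp X (0 |: T) <->
  forall a : A, #|[set x in X | a - x \in 0 |: T]| = 1%N.
Proof.
split.
- move=> H a; have [[m n] [[/= Hm Hn Ha] Hu]] := H a.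
  apply/eqP/cards1P; exists m; apply/finset.setP => x; rewrite !inE.
  apply/andP/eqP.
  + move=> [Hx Hx'].
    have := Hu (x, a - x); rewrite /= => /(_ (And3 Hx _ _)).
    have Hx2 : a - x \in 0 |: T by rewrite in_setU1.
    move=> /(_ Hx2); rewrite addrC subrK => /(_ erefl).
    by case.
  + move=> ->; split=> //; rewrite Ha addrC addKr; by rewrite in_setU1 in Hn.
- move=> H a; have /eqP/cards1P [m Hm] := H a.
  have : m \in [set x in X | a - x \in 0 |: T] by rewrite Hm set11.
  rewrite inE => /andP [Hm1 Hm2].
  exists (m, a - m); split; first by split=> //=; rewrite addrC subrK.
  move=> [y s] [/= Hy Hs Ha].
  have : y \in [set x in X | a - x \in 0 |: T].
    by rewrite inE Hy Ha addrC addKr.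
  rewrite Hm inE => /eqP Hym; subst y.
  by rewrite Ha addrC addKr.
Qed.

Lemma card_eq T X : square_free T -> inverse_closed X -> forall v : A,
  #|X :&: cays_ball T v| = #|[set x in X | v - x \in 0 |: T]|.
Proof.
move=> HT HX v.
have T0 : 0 \notin T.
  by apply/negP => /HT; apply; exists 0; rewrite mul0rn.
have T2 : v + v \notin T.
  by apply/negP => /HT; apply; exists v; rewrite mulr2n.
rewrite -(cardsID [set v] (X :&: _)) -(cardsID [set v] [set x in X | _]).
congr (_ + _)%N.
- apply: eq_card => x; rewrite !inE /cays_adj.
  by case: (x =P v) => [->|]; rewrite ?subrr ?eqxx ?andbF.
- have -> : [set x in X | v - x \in 0 |: T] :\: [set v] =
            [set - x | x in [set x in X | v + x \in T]].
    apply/finset.setP => y; rewrite !inE; apply/andP/imsetP.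
    + move=> [Hyv /andP [Hy]]; rewrite ?inE => /orP [/eqP|] Hvy.
        by move/eqP: Hvy; rewrite subr_eq0 eq_sym (negbTE Hyv).
      exists (- y); last by rewrite opprK.
      by rewrite inE negX // Hy /= Hvy.
    + move=> [x]; rewrite inE => /andP [Hx Hvx] ->.
      split; last by rewrite negX // Hx opprK Hvx orbT.
      by apply/negP => /eqP Hxv; move: Hvx; rewrite -Hxv addNr (negbTE T0).
  rewrite card_imset; last exact: oppr_inj.
  apply: eq_card => x; rewrite !inE /cays_adj.
  case: (x =P v) => [->|] /=; first by rewrite (negbTE T2) andbF.
  by move=> /eqP Hn; rewrite eq_sym Hn.
Qed.
End Aux.

Theorem corollary2p6 (A : finZmodType) (T X : {set A}) :
  ~~ odd #|A| ->
  square_free T ->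
  inverse_closed X ->
  (perfect_code T X <-> direct_sum_decomp X (0 |: T)).
Proof.
move=> _ HT HX; rewrite /perfect_code; split.
- by move=> H; apply/ds_iff => v; rewrite -(@card_eq _ _ _ HT HX v).
- by move=> /ds_iff H v; rewrite (@card_eq _ _ _ HT HX v).
Qed.
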